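(* With the notation of the context, for every $\rho\in(-1,1)$, $$e^{-\frac{\eta^2T}{2}}\le\frac{1+\frac{w(\rho)}{2}}{e^{\frac{\eta^2T}{2}}+\frac{w(\rho)}{2}}\le\frac{D}{p}\le1,$$ $$1\le\frac{G}{p}\le1+\frac{w(\rho)e_2}{2\eta^2T+\eta^2Tw(\rho)}\le1+\frac{e_2}{\eta^2T},$$ where $e_2=e^{2\eta^2T}-2(1+\eta^2T)e^{\frac{\eta^2T}{2}}+\eta^2T+1$.
   Context: Fix $T>0$, $r,\nu,\mu\in\mathbb R$, $\eta>0$, $\sigma>0$, $\rho\in(-1,1)$, $s_0>0$, $\lambda>0$, $\gamma>0$; $N$ is a standard Gaussian random variable; $W$ is the Lambert function (inverse of $x\in(-1,\infty)\mapsto xe^x$). Let $\theta(\rho)=\lambda\gamma(1-\rho^2)$, $w(\rho)=W\left(s_0\eta^2Te^{(\nu-\eta\rho\frac{\mu-r}{\sigma}-\frac{\eta^2}{2})T}\theta(\rho)\right)$, $$D=\frac{\lambda e^{-rT}}{\theta(\rho)\eta^2T}w(\rho)\left(1+\frac{w(\rho)}2\right),\qquad G=\frac{\lambda e^{-rT}}{\theta(\rho)}\frac{w(\rho)}{\eta^2T}\left(e^{\frac{\eta^2}{2}T}+\frac{w(\rho)}2\right),$$ and let $p$ be the asking reservation price of $\lambda$ units of the non-traded stock, $$p=-\frac{e^{-rT}}{\gamma(1-\rho^2)}\ln\mathbb E\exp\left(-\theta(\rho)s_0e^{(\nu-\eta\rho\frac{\mu-r}{\sigma}-\frac{\eta^2}{2})T}e^{\eta\sqrt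 TN}\right).$$ *)

(* Defs.v *)
From Stdlib Require Import Reals ClassicalEpsilon.
From Coquelicot Require Import Coquelicot.
Open Scope R_scope.

(* Lambert function W: inverse of x in (-1,oo) |-> x e^x.
   Chosen by Hilbert epsilon; for y >= -1/e it is the unique such x. *)
Definition LambertW (y : R) : R :=
  epsilon (inhabits 0) (fun x => -1 < x /\ x * exp x = y).

Definition gauss_density (x : R) : R := exp (- x ^ 2 / 2) / sqrt (2 * PI).

Definition gauss_expect (g : R -> R) : R :=
  RInt_gen (fun x => g x * gauss_density x)
    (Rbar_locally m_infty) (Rbar_locally p_infty).

Definition theta (lam gam rho : R) : R := lam * gam * (1 - rho ^ 2).

Definition drift (nu eta rho mu r sigma : R) : R :=
  nu - eta * rho * ((mu - r) / sigma) - eta ^ 2 / 2.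

Definition wfun (T r nu mu eta sigma rho s0 lam gam : R) : R :=
  LambertW (s0 * eta ^ 2 * T * exp (drift nu eta rho mu r sigma * T)
            * theta lam gam rho).

Definition Dval (T r nu mu eta sigma rho s0 lam gam : R) : R :=
  let w := wfun T r nu mu eta sigma rho s0 lam gam in
  lam * exp (- r * T) / (theta lam gam rho * eta ^ 2 * T) * w * (1 + w / 2).

Definition Gval (T r nu mu eta sigma rho s0 lam gam : R) : R :=
  let w := wfun T r nu mu eta sigma rho s0 lam gam in
  lam * exp (- r * T) / theta lam gam rho * (w / (eta ^ 2 * T))
    * (exp (eta ^ 2 / 2 * T) + w / 2).

(* asking reservation price of lam units of the non-traded stock *)
Definition pval (T r nu mu eta sigma rho s0 lam gam : R) : R :=
  - exp (- r * T) / (gam * (1 - rho ^ 2))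
    * ln (gauss_expect (fun n =>
        exp (- theta lam gam rho * s0 * exp (drift nu eta rho mu r sigma * T)
             * exp (eta * sqrt T * n)))).

Definition e2 (eta T : R) : R :=
  exp (2 * eta ^ 2 * T) - 2 * (1 + eta ^ 2 * T) * exp (eta ^ 2 * T / 2)
  + eta ^ 2 * T + 1.

(* Main.v *)
Require Import Defs.
From Stdlib Require Import Reals Lra Psatz ClassicalEpsilon.
From Coquelicot Require Import Coquelicot.
Open Scope R_scope.

Definition g0 (x : R) : R := exp (- x ^ 2 / 2).

Lemma g0_pos x : 0 < g0 x.
Proof. apply exp_pos. Qed.

Lemma contR (f : R -> R) x : ex_derive f x -> continuous f x.
Proof. intro H. apply (@ex_derive_continuous R_AbsRing R_NormedModule). exact H. Qed.

Lemma g0_cont x : continuous g0 x.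
Proof. apply contR. unfold g0. auto_derive. auto. Qed.


Lemma lim_pinf (f : R -> R) l :
  (forall eps, 0 < eps -> exists M, forall x, M < x -> Rabs (f x - l) < eps) ->
  filterlim f (Rbar_locally p_infty) (locally l).
Proof.
intro H. apply filterlim_locally. intro eps.
destruct (H eps (cond_pos eps)) as [M HM]. exists M. intros x Hx.
apply HM. exact Hx.
Qed.

Lemma lim_minf (f : R -> R) l :
  (forall eps, 0 < eps -> exists M, forall x, x < M -> Rabs (f x - l) < eps) ->
  filterlim f (Rbar_locally m_infty) (locally l).
Proof.
intro H. apply filterlim_locally. intro eps.
destruct (H eps (cond_pos eps)) as [M HM]. exists M. intros x Hx.
apply HM. exact Hx.
Qed.

Lemma g0_inv x : g0 x * (1 + x^2/2) <= 1.
Proof.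
unfold g0. replace (- x ^ 2 / 2) with (- (x^2/2)) by field.
rewrite exp_Ropp. pose proof (exp_ineq1_le (x^2/2)). pose proof (exp_pos (x^2/2)).
apply (Rmult_le_reg_l (exp (x^2/2))); auto. field_simplify; try lra.
Qed.

Lemma g0_tail eps : 0 < eps -> exists M, forall x, M < Rabs x ->
  Rabs x * g0 x < eps /\ g0 x < eps.
Proof.
intro He. exists (2/eps + 1). intros x Hx.
assert (H2 : 0 < 2/eps) by (apply Rdiv_lt_0_compat; lra).
pose proof (g0_inv x). pose proof (g0_pos x).
assert (Hx2 : x^2 = Rabs x * Rabs x) by (rewrite <- Rabs_mult; simpl; rewrite Rmult_1_r; rewrite Rabs_right; nra).
assert (Hxg : Rabs x * g0 x < eps).
{ assert (Rabs x * g0 x * Rabs x <= 2).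
  { rewrite Hx2 in H. nra. }
  assert (2 < eps * Rabs x).
  { assert (2/eps * eps = 2) by (field; lra). nra. }
  nra. }
split; auto. nra.
Qed.

Ltac toR := match goal with |- ?a = ?b => change (@eq R a b) end.

Ltac fix_exp := repeat match goal with |- context [exp ?A] => match goal with |- context [exp ?B] => assert_fails (constr_eq A B); replace A with B by (field || ring) end end.

Definition Fg (x : R) : R := RInt g0 0 x.

Lemma ex_RInt_g0 a b : ex_RInt g0 a b.
Proof. apply (@ex_RInt_continuous R_CompleteNormedModule). intros; apply g0_cont. Qed.

Lemma Fg_deriv (x : R) : is_derive Fg x (g0 x).
Proof.
apply (is_derive_RInt g0 Fg 0 x).
- apply filter_forall. intro b. apply (@RInt_correct R_CompleteNormedModule). apply ex_RInt_g0.
- apply g0_cont.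
Qed.

Definition kf (x t : R) : R := exp (- (x ^ 2 * (1 + t ^ 2)) / 2) / (1 + t ^ 2).
Definition K (x : R) : R := RInt (fun t => kf x t) 0 1.

Lemma onept t : 1 + t^2 <> 0.
Proof. nra. Qed.

Lemma kf_dx (u t : R) : is_derive (fun z => kf z t) u (- u * exp (- (u ^ 2 * (1 + t ^ 2)) / 2)).
Proof.
unfold kf. auto_derive. exact I.
replace (- (u ^ 2 * (1 + t ^ 2)) / 2) with (- (u * (u * 1) * (1 + t * (t * 1))) * / 2) by (unfold Rdiv; ring).
field. nra.
Qed.

Lemma K_deriv (x : R) : is_derive K x (- g0 x * Fg x).
Proof.
assert (H := is_derive_RInt_param kf 0 1 x).
unfold K.
replace (- g0 x * Fg x) with (RInt (fun t => Derive (fun u => kf u t) x) 0 1).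
apply H.
- apply filter_forall. intros y t _. eexists. apply kf_dx.
- intros t _. apply continuity_2d_pt_ext with (f := fun u v => - u * exp (- (u ^ 2 * (1 + v ^ 2)) / 2)).
  + intros u v. symmetry. apply is_derive_unique. apply kf_dx.
  + apply continuity_2d_pt_mult.
    * apply continuity_2d_pt_opp. apply continuity_2d_pt_id1.
    * apply continuity_1d_2d_pt_comp with (f := exp) (g := fun u v => - (u ^ 2 * (1 + v ^ 2)) / 2).
      -- apply derivable_continuous_pt. apply derivable_pt_exp.
      -- apply continuity_2d_pt_ext with (f := fun u v => (-/2) * (u*u*(1+v*v))).
         intros; field.
         apply continuity_2d_pt_mult. apply continuity_2d_pt_const.
         apply continuity_2d_pt_mult. apply continuity_2d_pt_mult; apply continuity_2d_pt_id1.
         apply continuity_2d_pt_plus. apply continuity_2d_pt_const.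
         apply continuity_2d_pt_mult; apply continuity_2d_pt_id2.
- apply filter_forall. intro y. apply (@ex_RInt_continuous R_CompleteNormedModule). intros t _.
  apply contR. unfold kf. auto_derive. apply onept.
- rewrite (RInt_ext _ (fun t => scal (- g0 x) (scal x (g0 (x * t + 0))))).
  + rewrite (@RInt_scal R_CompleteNormedModule). rewrite (@RInt_comp_lin R_CompleteNormedModule). 
    rewrite Rmult_0_r, Rplus_0_r, Rmult_1_r, Rplus_0_r. reflexivity.
    apply ex_RInt_g0.
    apply (@ex_RInt_continuous R_CompleteNormedModule). intros; apply contR. unfold g0, scal; simpl; unfold mult; simpl. auto_derive; auto.
  + intros t _. replace (Derive (fun u : R => kf u t) x) with (- x * exp (- (x ^ 2 * (1 + t ^ 2)) / 2)) by (symmetry; apply is_derive_unique; apply kf_dx).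
    unfold g0. change (scal ?a ?b) with (a * b).
    replace (- (x ^ 2 * (1 + t ^ 2)) / 2) with (- x^2/2 + - (x*t+0)^2/2) by field.
    rewrite exp_plus. match goal with |- ?a = ?b => change (@eq R a b) end. unfold scal; simpl; unfold mult; simpl. ring.
Qed.

Definition Hf (x : R) : R := Fg x * Fg x + 2 * K x.

Lemma Hf_deriv (x : R) : is_derive Hf x 0.
Proof.
apply is_derive_Reals. unfold Hf.
replace 0 with (g0 x * Fg x + Fg x * g0 x + 2 * (- g0 x * Fg x)) by ring.
apply derivable_pt_lim_plus.
- apply derivable_pt_lim_mult; apply is_derive_Reals; apply Fg_deriv.
- apply derivable_pt_lim_scal. apply is_derive_Reals. apply K_deriv.
Qed.

Lemma RInt_zero (a b : R) : RInt (fun _ => 0) a b = 0.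
Proof.
rewrite (@RInt_const R_CompleteNormedModule). unfold scal; simpl; unfold mult; simpl. ring.
Qed.

Lemma Hf_const (x : R) : Hf x = Hf 0.
Proof.
assert (H := @is_RInt_derive R_CompleteNormedModule Hf (fun _ => 0) 0 x).
assert (H1 : is_RInt (fun _ : R => 0) 0 x (minus (Hf x) (Hf 0))).
{ apply H. intros; apply Hf_deriv. intros; apply continuous_const. }
apply (@is_RInt_unique R_CompleteNormedModule) in H1. rewrite RInt_zero in H1.
unfold minus, plus, opp in H1; simpl in H1. lra.
Qed.

Lemma Fg_0 : Fg 0 = 0.
Proof. unfold Fg. apply (@RInt_point R_CompleteNormedModule). Qed.

Lemma K_0 : K 0 = PI / 4.
Proof.
unfold K.
assert (H := @is_RInt_derive R_CompleteNormedModule atan (fun t => / (1 + t ^ 2)) 0 1).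
assert (H1 : is_RInt (fun t => / (1 + t ^ 2)) 0 1 (minus (atan 1) (atan 0))).
{ apply H.
  - intros. apply is_derive_Reals. apply derivable_pt_lim_atan.
  - intros. apply contR. auto_derive. nra. }
apply (@is_RInt_unique R_CompleteNormedModule) in H1.
transitivity (RInt (fun t => / (1 + t ^ 2)) 0 1).
- apply RInt_ext. intros t _. unfold kf. match goal with |- ?a = ?b => change (@eq R a b) end.
  replace (- (0 ^ 2 * (1 + t ^ 2)) / 2) with 0 by field. rewrite exp_0. field. nra.
- rewrite H1, atan_0, atan_1. unfold minus, plus, opp; simpl. ring.
Qed.

Lemma Fg_sq (x : R) : Fg x * Fg x = PI / 2 - 2 * K x.
Proof.
pose proof (Hf_const x). unfold Hf in H. rewrite Fg_0, K_0 in H. lra.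
Qed.

Lemma kf_cont (x : R) t : continuous (fun t => kf x t) t.
Proof. apply contR. unfold kf. auto_derive. nra. Qed.

Lemma K_ge0 (x : R) : 0 <= K x.
Proof.
unfold K. apply RInt_ge_0. lra.
apply (@ex_RInt_continuous R_CompleteNormedModule). intros; apply kf_cont.
intros t _. unfold kf. apply Rlt_le. apply Rdiv_lt_0_compat. apply exp_pos. nra.
Qed.

Lemma K_le (x : R) : K x <= g0 x.
Proof.
unfold K.
replace (g0 x) with (RInt (fun _ => g0 x) 0 1).
2:{ rewrite (@RInt_const R_CompleteNormedModule). unfold scal; simpl; unfold mult; simpl. ring. }
apply RInt_le. lra.
apply (@ex_RInt_continuous R_CompleteNormedModule). intros; apply kf_cont.
apply (@ex_RInt_continuous R_CompleteNormedModule). intros; apply continuous_const.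
intros t _. unfold kf, g0.
assert (h1 : 1 <= 1 + t^2) by nra.
assert (h2 : exp (- (x ^ 2 * (1 + t ^ 2)) / 2) <= exp (- x ^ 2 / 2)).
{ apply exp_le_3 || idtac. destruct (Req_dec (- (x ^ 2 * (1 + t ^ 2)) / 2) (- x ^ 2 / 2)) as [E|E].
  rewrite E; lra. left. apply exp_increasing. nra. }
pose proof (exp_pos (- (x ^ 2 * (1 + t ^ 2)) / 2)).
apply Rle_trans with (exp (- (x ^ 2 * (1 + t ^ 2)) / 2)); auto.
unfold Rdiv. rewrite <- (Rmult_1_r (exp _)) at 2. apply Rmult_le_compat_l. lra.
rewrite <- Rinv_1. apply Rinv_le_contravar; lra.
Qed.

Lemma Fg_opp (x : R) : Fg (- x) = - Fg x.
Proof.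
unfold Fg.
assert (H := @RInt_comp_lin R_CompleteNormedModule g0 (-1) 0 0 x).
replace (-1 * 0 + 0) with 0 in H by ring. replace (-1 * x + 0) with (-x) in H by ring.
rewrite <- H. 2: apply ex_RInt_g0.
rewrite (RInt_ext _ (fun y => scal (-1) (g0 y))).
rewrite (@RInt_scal R_CompleteNormedModule). unfold scal; simpl; unfold mult; simpl. ring.
apply ex_RInt_g0.
intros y _. unfold g0. f_equal. f_equal. field.
Qed.

Lemma Fg_ge0 (x : R) : 0 <= x -> 0 <= Fg x.
Proof.
intro. unfold Fg. apply RInt_ge_0; auto. apply ex_RInt_g0. intros; left; apply g0_pos.
Qed.

Definition sq2 : R := sqrt (PI / 2).

Lemma sq2_pos : 0 < sq2.
Proof. unfold sq2. apply sqrt_lt_R0. pose proof PI_RGT_0. lra. Qed.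

Lemma sq2_sq : sq2 * sq2 = PI / 2.
Proof. unfold sq2. apply sqrt_sqrt. pose proof PI_RGT_0. lra. Qed.

Lemma Fg_close (x : R) : 0 <= x -> Rabs (Fg x - sq2) <= 2 * g0 x / sq2.
Proof.
intro Hx. pose proof (Fg_ge0 x Hx). pose proof sq2_pos. pose proof (Fg_sq x).
pose proof (K_ge0 x). pose proof (K_le x). pose proof sq2_sq.
assert (E : (Fg x - sq2) * (Fg x + sq2) = - 2 * K x) by nra.
assert (Fg x <= sq2) by nra.
rewrite Rabs_left1 by lra.
apply (Rmult_le_reg_r sq2); auto. unfold Rdiv. rewrite Rmult_assoc, Rinv_l by lra.
nra.
Qed.

Lemma Fg_lim_p : filterlim Fg (Rbar_locally p_infty) (locally sq2).
Proof.
apply lim_pinf. intros eps He. pose proof sq2_pos.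
destruct (g0_tail (eps * sq2 / 2)) as [M HM]. apply Rdiv_lt_0_compat; nra.
exists (Rmax M 0). intros x Hx.
assert (0 <= x) by (pose proof (Rmax_r M 0); lra).
assert (M < Rabs x) by (rewrite Rabs_right by lra; pose proof (Rmax_l M 0); lra).
destruct (HM x H1) as [_ Hg].
eapply Rle_lt_trans. apply Fg_close; auto.
apply (Rmult_lt_reg_r sq2); auto. unfold Rdiv. rewrite Rmult_assoc, Rinv_l by lra. nra.
Qed.

Lemma Fg_lim_m : filterlim Fg (Rbar_locally m_infty) (locally (- sq2)).
Proof.
apply lim_minf. intros eps He. pose proof sq2_pos.
destruct (g0_tail (eps * sq2 / 2)) as [M HM]. apply Rdiv_lt_0_compat; nra.
exists (- Rmax M 0). intros x Hx.
assert (0 <= -x) by (pose proof (Rmax_r M 0); lra).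
assert (M < Rabs (-x)) by (rewrite Rabs_right by lra; pose proof (Rmax_l M 0); lra).
destruct (HM (-x) H1) as [_ Hg].
replace (Fg x - - sq2) with (- (Fg (-x) - sq2)) by (rewrite (Fg_opp x); ring).
rewrite Rabs_Ropp.
eapply Rle_lt_trans. apply Fg_close; auto.
apply (Rmult_lt_reg_r sq2); auto. unfold Rdiv. rewrite Rmult_assoc, Rinv_l by lra. nra.
Qed.

Notation MI := (Rbar_locally m_infty).
Notation PI_ := (Rbar_locally p_infty).

Lemma gen_antider (F f : R -> R) la lb :
  (forall x, is_derive F x (f x)) -> (forall x, continuous f x) ->
  filterlim F MI (locally la) -> filterlim F PI_ (locally lb) ->
  is_RInt_gen f MI PI_ (lb - la).
Proof.
intros HD HC Hla Hlb.
apply (is_RInt_gen_ext (Derive F)).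
- apply filter_forall. intros ab x _. apply is_derive_unique. apply HD.
- apply is_RInt_gen_Derive; auto.
  + apply filter_forall. intros ab x _. eexists. apply HD.
  + apply filter_forall. intros ab x _.
    apply (continuous_ext f). intro y. symmetry. apply is_derive_unique. apply HD.
    apply HC.
Qed.

Lemma shift_p (F : R -> R) l m : filterlim F PI_ (locally l) ->
  filterlim (fun x => F (x - m)) PI_ (locally l).
Proof.
intro H. apply (filterlim_comp _ _ _ (fun x => x - m) F PI_ PI_); auto.
intros P [M HM]. exists (M + m). intros x Hx. apply HM. lra.
Qed.

Lemma shift_m (F : R -> R) l m : filterlim F MI (locally l) ->
  filterlim (fun x => F (x - m)) MI (locally l).
Proof.
intro H. apply (filterlim_comp _ _ _ (fun x => x - m) F MI MI); auto.
intros P [M HM]. exists (M + m). intros x Hx. apply HM. lra.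
Qed.

Lemma g0_lim_p : filterlim g0 PI_ (locally 0).
Proof.
apply lim_pinf. intros eps He. destruct (g0_tail eps He) as [M HM].
exists (Rabs M). intros x Hx. assert (M < Rabs x).
{ pose proof (Rle_abs M). rewrite Rabs_right; [lra|]. pose proof (Rabs_pos M); lra. }
destruct (HM x H). pose proof (g0_pos x). rewrite Rminus_0_r, Rabs_right; lra.
Qed.

Lemma g0_lim_m : filterlim g0 MI (locally 0).
Proof.
apply lim_minf. intros eps He. destruct (g0_tail eps He) as [M HM].
exists (- Rabs M). intros x Hx. assert (M < Rabs x).
{ pose proof (Rle_abs M). rewrite Rabs_left; [lra|]. pose proof (Rabs_pos M); lra. }
destruct (HM x H). pose proof (g0_pos x). rewrite Rminus_0_r, Rabs_right; lra.
Qed.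

Lemma xg0_lim_p : filterlim (fun x => x * g0 x) PI_ (locally 0).
Proof.
apply lim_pinf. intros eps He. destruct (g0_tail eps He) as [M HM].
exists (Rabs M). intros x Hx. assert (M < Rabs x).
{ pose proof (Rle_abs M). rewrite Rabs_right; [lra|]. pose proof (Rabs_pos M); lra. }
destruct (HM x H). rewrite Rminus_0_r, Rabs_mult. rewrite (Rabs_right (g0 x)); auto.
left; apply g0_pos.
Qed.

Lemma xg0_lim_m : filterlim (fun x => x * g0 x) MI (locally 0).
Proof.
apply lim_minf. intros eps He. destruct (g0_tail eps He) as [M HM].
exists (- Rabs M). intros x Hx. assert (M < Rabs x).
{ pose proof (Rle_abs M). rewrite Rabs_left; [lra|]. pose proof (Rabs_pos M); lra. }
destruct (HM x H). rewrite Rminus_0_r, Rabs_mult. rewrite (Rabs_right (g0 x)); auto.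
left; apply g0_pos.
Qed.

Lemma G0 m : is_RInt_gen (fun x => g0 (x - m)) MI PI_ (2 * sq2).
Proof.
replace (2 * sq2) with (sq2 - - sq2) by ring.
apply (gen_antider (fun x => Fg (x - m))).
- intro x. assert (H := is_derive_comp Fg (fun x => x - m) x (g0 (x - m)) 1).
  replace (g0 (x - m)) with (scal 1 (g0 (x - m))). apply H. apply Fg_deriv.
  apply is_derive_Reals. replace 1 with (1 - 0) by ring. apply derivable_pt_lim_minus.
  apply derivable_pt_lim_id. apply derivable_pt_lim_const.
  unfold scal; simpl; unfold mult; simpl. ring.
- intro x. apply contR. unfold g0. auto_derive. auto.
- apply shift_m. apply Fg_lim_m.
- apply shift_p. apply Fg_lim_p.
Qed.

Lemma G1 m : is_RInt_gen (fun x => (x - m) * g0 (x - m)) MI PI_ 0.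
Proof.
replace 0 with (0 - 0) by ring.
apply (gen_antider (fun x => - g0 (x - m))).
- intro x. unfold g0. auto_derive. auto. toR. fix_exp. field.
- intro x. apply contR. unfold g0. auto_derive. auto.
- apply (shift_m (fun u => - g0 u)). replace 0 with (- 0) by ring.
  apply (filterlim_comp _ _ _ g0 Ropp MI (locally 0) (locally (-0))). apply g0_lim_m.
  apply (filterlim_opp 0).
- apply (shift_p (fun u => - g0 u)). replace 0 with (- 0) by ring.
  apply (filterlim_comp _ _ _ g0 Ropp PI_ (locally 0) (locally (-0))). apply g0_lim_p.
  apply (filterlim_opp 0).
Qed.

Lemma G2 m : is_RInt_gen (fun x => (x - m) ^ 2 * g0 (x - m)) MI PI_ (2 * sq2).
Proof.
assert (A : is_RInt_gen (fun x => (x - m) ^ 2 * g0 (x - m) - g0 (x - m)) MI PI_ (0 - 0)).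
{ apply (gen_antider (fun x => - ((x - m) * g0 (x - m)))).
  - intro x. unfold g0. auto_derive. auto. toR. fix_exp. field.
  - intro x. apply contR. unfold g0. auto_derive. auto.
  - apply (shift_m (fun u => - (u * g0 u))). replace 0 with (- 0) by ring.
    apply (filterlim_comp _ _ _ (fun u => u * g0 u) Ropp MI (locally 0) (locally (-0))). apply xg0_lim_m.
    apply (filterlim_opp 0).
  - apply (shift_p (fun u => - (u * g0 u))). replace 0 with (- 0) by ring.
    apply (filterlim_comp _ _ _ (fun u => u * g0 u) Ropp PI_ (locally 0) (locally (-0))). apply xg0_lim_p.
    apply (filterlim_opp 0). }
assert (B := is_RInt_gen_plus _ _ _ _ A (G0 m)).
replace (2 * sq2) with (plus (0 - 0) (2 * sq2)) by (unfold plus; simpl; ring).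
refine (is_RInt_gen_ext _ _ _ _ B). apply filter_forall. intros ab x _. unfold plus; simpl. ring.
Qed.

Definition gd (x : R) : R := exp (- x ^ 2 / 2) / sqrt (2 * PI).

Lemma sqrt2pi : sqrt (2 * PI) = 2 * sq2.
Proof.
pose proof sq2_pos. pose proof sq2_sq. pose proof PI_RGT_0.
rewrite <- (sqrt_square (2 * sq2)) by lra. f_equal. nra.
Qed.

Lemma sqrt2pi_pos : 0 < sqrt (2 * PI).
Proof. rewrite sqrt2pi. pose proof sq2_pos. lra. Qed.

Lemma exp_shift s x : exp (s * x) * g0 x = exp (s ^ 2 / 2) * g0 (x - s).
Proof. unfold g0. rewrite <- !exp_plus. f_equal. field. Qed.

Lemma Mpoly p0 p1 p2 s :
  is_RInt_gen (fun x => (p0 + p1 * x + p2 * x ^ 2) * exp (s * x) * gd x) MI PI_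
    ((p0 + p1 * s + p2 * (1 + s ^ 2)) * exp (s ^ 2 / 2)).
Proof.
set (C := exp (s ^ 2 / 2) / sqrt (2 * PI)).
set (A := p0 + p1 * s + p2 * s ^ 2).
set (B := p1 + 2 * p2 * s).
assert (H1 := is_RInt_gen_scal _ A _ (G0 s)).
assert (H2 := is_RInt_gen_scal _ B _ (G1 s)).
assert (H3 := is_RInt_gen_scal _ p2 _ (G2 s)).
assert (H4 := is_RInt_gen_plus _ _ _ _ H2 H3).
assert (H5 := is_RInt_gen_plus _ _ _ _ H1 H4).
assert (H6 := is_RInt_gen_scal _ C _ H5).
replace ((p0 + p1 * s + p2 * (1 + s ^ 2)) * exp (s ^ 2 / 2)) with
  (scal C (plus (scal A (2 * sq2)) (plus (scal B 0) (scal p2 (2 * sq2))))).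
2:{ unfold scal, plus; simpl; unfold mult; simpl. unfold C, A. rewrite sqrt2pi.
    pose proof sq2_pos. toR. fix_exp. field. lra. }
refine (is_RInt_gen_ext _ _ _ _ H6). apply filter_forall. intros ab x _.
unfold scal, plus; simpl; unfold mult; simpl. toR.
transitivity ((p0 + p1 * x + p2 * x ^ 2) * (exp (s * x) * g0 x) / sqrt (2 * PI)).
2:{ unfold gd, g0. pose proof sqrt2pi_pos. field. lra. }
rewrite exp_shift. unfold C, A, B. pose proof sqrt2pi_pos. field. lra.
Qed.

Lemma gen_nonneg (h : R -> R) l : (forall x, 0 <= h x) -> is_RInt_gen h MI PI_ l -> 0 <= l.
Proof.
intros Hh H. destruct (Rle_or_lt 0 l) as [|Hl]; auto. exfalso.
assert (He : 0 < - l / 2) by lra.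
specialize (H (ball l (mkposreal _ He)) (locally_ball _ _)).
destruct H as [Q R' [M1 HQ] [M2 HR] HP].
set (a := Rmin M1 0 - 1). set (b := Rmax M2 0 + 1).
assert (Ha : a < M1) by (unfold a; pose proof (Rmin_l M1 0); lra).
assert (Hb : M2 < b) by (unfold b; pose proof (Rmax_l M2 0); lra).
destruct (HP a b (HQ a Ha) (HR b Hb)) as [y [Hy1 Hy2]].
simpl in Hy1.
assert (0 <= y).
{ apply (is_RInt_ge_0 h a b); auto. unfold a, b. pose proof (Rmin_r M1 0). pose proof (Rmax_r M2 0). lra.
  }
unfold ball in Hy2; simpl in Hy2. unfold AbsRing_ball, abs, minus, plus, opp in Hy2; simpl in Hy2.
apply Rabs_def2 in Hy2. lra.
Qed.

Lemma gen_le (f g : R -> R) lf lg : (forall x, f x <= g x) ->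
  is_RInt_gen f MI PI_ lf -> is_RInt_gen g MI PI_ lg -> lf <= lg.
Proof.
intros Hfg Hf Hg.
assert (H := is_RInt_gen_minus _ _ _ _ Hg Hf).
apply gen_nonneg in H. unfold minus, plus, opp in H; simpl in H. lra.
intro x. unfold minus, plus, opp; simpl. specialize (Hfg x). lra.
Qed.

Lemma absle x B : Rabs x <= B -> - B <= x <= B.
Proof. unfold Rabs; destruct (Rcase_abs x); lra. Qed.

Lemma mono_lim_p (F : R -> R) B : (forall x y, x <= y -> F x <= F y) -> (forall x, F x <= B) ->
  exists l, forall eps, 0 < eps -> exists M, forall x, M < x -> Rabs (F x - l) < eps.
Proof.
intros Hm Hb.
set (E := fun z => exists x, z = F x).
destruct (completeness E) as [l [Hl1 Hl2]].
- exists B. intros z [x ->]. apply Hb.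
- exists (F 0), 0. reflexivity.
- exists l. intros eps He.
  destruct (Classical_Prop.classic (exists x0, l - eps < F x0)) as [[x0 Hx0]|Hn].
  + exists x0. intros x Hx. assert (F x0 <= F x) by (apply Hm; lra).
    assert (F x <= l) by (apply Hl1; exists x; auto).
    apply Rabs_def1; lra.
  + exfalso. assert (l <= l - eps). apply Hl2. intros z [x ->].
    destruct (Rle_or_lt (F x) (l - eps)); auto. exfalso; apply Hn; exists x; auto.
    lra.
Qed.

Lemma mono_lims (F : R -> R) B : (forall x y, x <= y -> F x <= F y) -> (forall x, Rabs (F x) <= B) ->
  exists la lb, filterlim F MI (locally la) /\ filterlim F PI_ (locally lb).
Proof.
intros Hm Hb.
destruct (mono_lim_p F B Hm) as [lb Hlb].
{ intro x. specialize (Hb x). apply absle in Hb. lra. }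
destruct (mono_lim_p (fun x => - F (- x)) B) as [la Hla].
{ intros x y Hxy. assert (F (-y) <= F (-x)) by (apply Hm; lra). lra. }
{ intro x. specialize (Hb (-x)). apply absle in Hb. lra. }
exists (- la), lb. split.
- apply lim_minf. intros eps He. destruct (Hla eps He) as [M HM].
  exists (- M). intros x Hx. specialize (HM (-x)). rewrite Ropp_involutive in HM.
  replace (F x - - la) with (- (- F x - la)) by ring. rewrite Rabs_Ropp. apply HM. lra.
- apply lim_pinf. auto.
Qed.

Lemma gd_cont x : continuous gd x.
Proof. apply contR. unfold gd. auto_derive. pose proof sqrt2pi_pos. lra. Qed.

Lemma gd_pos x : 0 < gd x.
Proof. unfold gd. apply Rdiv_lt_0_compat. apply exp_pos. apply sqrt2pi_pos. Qed.

Lemma ex_RInt_cont (f : R -> R) a b : (forall x, continuous f x) -> ex_RInt f a b.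
Proof. intro H. apply (@ex_RInt_continuous R_CompleteNormedModule). intros; apply H. Qed.

Lemma Fg_bound x : Rabs (Fg x) <= sq2.
Proof.
pose proof (Fg_sq x). pose proof (K_ge0 x). pose proof sq2_sq. pose proof sq2_pos.
apply Rabs_le. split; nra.
Qed.

Lemma RInt_gd a b : RInt gd a b = (Fg b - Fg a) / sqrt (2 * PI).
Proof.
transitivity (RInt (fun x => scal (/ sqrt (2 * PI)) (g0 x)) a b).
- apply RInt_ext. intros. unfold gd, g0, scal; simpl; unfold mult; simpl. toR. field.
  pose proof sqrt2pi_pos; lra.
- rewrite (@RInt_scal R_CompleteNormedModule). 2: apply ex_RInt_g0.
  unfold Fg. rewrite <- (@RInt_Chasles R_CompleteNormedModule g0 a 0 b).
  rewrite <- (@opp_RInt_swap R_CompleteNormedModule g0 a 0).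
  unfold scal, plus, opp; simpl; unfold mult, plus, opp; simpl. toR. field.
  pose proof sqrt2pi_pos; lra.
  all: apply ex_RInt_g0.
Qed.

Lemma ex_gen_pos (f : R -> R) : (forall x, continuous f x) -> (forall x, 0 <= f x <= gd x) ->
  exists l, is_RInt_gen f MI PI_ l.
Proof.
intros Hc Hb.
set (Ff := fun x => RInt f 0 x).
assert (Hd : forall x, is_derive Ff x (f x)).
{ intro x. apply (is_derive_RInt f Ff 0 x).
  apply filter_forall. intro b. apply (@RInt_correct R_CompleteNormedModule). apply ex_RInt_cont; auto.
  apply Hc. }
assert (Hseg : forall x y, x <= y -> 0 <= RInt f x y <= RInt gd x y).
{ intros x y Hxy. split.
  - apply RInt_ge_0; auto. apply ex_RInt_cont; auto. intros; apply Hb.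
  - apply RInt_le; auto. apply ex_RInt_cont; auto. apply ex_RInt_cont; apply gd_cont.
    intros; apply Hb. }
assert (Hch : forall x y, Ff y - Ff x = RInt f x y).
{ intros x y. unfold Ff. rewrite <- (@RInt_Chasles R_CompleteNormedModule f 0 x y).
  unfold plus; simpl. ring. apply ex_RInt_cont; auto. apply ex_RInt_cont; auto. }
destruct (mono_lims Ff 1) as [la [lb [Hla Hlb]]].
- intros x y Hxy. specialize (Hseg x y Hxy). rewrite <- Hch in Hseg. lra.
- intro x. assert (Ff 0 = 0) by (unfold Ff; apply (@RInt_point R_CompleteNormedModule)).
  pose proof (Fg_bound x). pose proof (Fg_bound 0). pose proof sqrt2pi.
  pose proof sq2_pos.
  destruct (Rle_or_lt 0 x) as [Hx0|Hx0].
  + specialize (Hseg 0 x Hx0). rewrite <- Hch, RInt_gd in Hseg.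
    apply absle in H0. apply absle in H1.
    assert ((Fg x - Fg 0) / sqrt (2 * PI) <= 1).
    { rewrite H2. apply (Rmult_le_reg_r (2 * sq2)). lra. unfold Rdiv.
      rewrite Rmult_assoc, Rinv_l by lra. lra. }
    apply Rabs_le; lra.
  + specialize (Hseg x 0 (Rlt_le _ _ Hx0)). rewrite <- Hch, RInt_gd in Hseg.
    apply absle in H0. apply absle in H1.
    assert ((Fg 0 - Fg x) / sqrt (2 * PI) <= 1).
    { rewrite H2. apply (Rmult_le_reg_r (2 * sq2)). lra. unfold Rdiv.
      rewrite Rmult_assoc, Rinv_l by lra. lra. }
    apply Rabs_le; lra.
- exists (lb - la). apply (gen_antider Ff); auto.
Qed.

Lemma exp_m x : exp (- x) = / exp x.
Proof. apply exp_Ropp. Qed.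

Lemma Mp p0 p1 p2 s l f :
  l = (p0 + p1 * s + p2 * (1 + s ^ 2)) * exp (s ^ 2 / 2) ->
  (forall x, f x = (p0 + p1 * x + p2 * x ^ 2) * exp (s * x) * gd x) ->
  is_RInt_gen f MI PI_ l.
Proof.
intros -> Hf. refine (is_RInt_gen_ext _ _ _ _ (Mpoly p0 p1 p2 s)).
apply filter_forall. intros ab x _. symmetry. apply Hf.
Qed.

Lemma gplus f g lf lg l h : is_RInt_gen f MI PI_ lf -> is_RInt_gen g MI PI_ lg ->
  l = lf + lg -> (forall x, h x = f x + g x) -> is_RInt_gen h MI PI_ l.
Proof.
intros Hf Hg -> Hh. assert (H := is_RInt_gen_plus _ _ _ _ Hf Hg).
refine (is_RInt_gen_ext _ _ _ _ H).
apply filter_forall. intros ab x _. symmetry. apply Hh.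
Qed.

Lemma gscal k f lf l h : is_RInt_gen f MI PI_ lf ->
  l = k * lf -> (forall x, h x = k * f x) -> is_RInt_gen h MI PI_ l.
Proof.
intros Hf -> Hh. assert (H := is_RInt_gen_scal _ k _ Hf).
refine (is_RInt_gen_ext _ _ _ _ H).
apply filter_forall. intros ab x _. symmetry. apply Hh.
Qed.

Definition RR (y : R) : R := exp y - 1 - y.

Lemma J0 c sg w : w = c * sg ^ 2 ->
  is_RInt_gen (fun x => exp (- c * (1 + (sg * x + w))) * gd x) MI PI_
    (exp (- (c * (1 + w / 2)))).
Proof.
intro Hw.
apply (Mp (exp (- c * (1 + w))) 0 0 (- c * sg)).
- rewrite <- (Rmult_1_r (exp (- (c * (1 + w / 2))))).
  replace (- (c * (1 + w / 2))) with (- c * (1 + w) + (- c * sg) ^ 2 / 2) by (subst; field).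
  rewrite exp_plus. ring.
- intro x. replace (- c * (1 + (sg * x + w))) with (- c * (1 + w) + (- c * sg) * x) by ring.
  rewrite exp_plus. ring.
Qed.

Lemma exp2 x : exp x ^ 2 = exp (x + x).
Proof. rewrite exp_plus. ring. Qed.

Lemma exp4 x : exp x ^ 4 = exp (x + x + x + x).
Proof. rewrite !exp_plus. ring. Qed.

Lemma eA c w : exp (- (c * (1 + w / 2))) = exp (- c * (1 + w)) * exp (c * w / 2).
Proof. rewrite <- exp_plus. f_equal. field. Qed.

Lemma es0 c sg w : w = c * sg ^ 2 -> exp ((- c * sg) ^ 2 / 2) = exp (c * w / 2).
Proof. intro; subst; f_equal; field. Qed.

Lemma es1 c sg w : w = c * sg ^ 2 ->
  exp (((1 - c) * sg) ^ 2 / 2) = exp (c * w / 2) * exp (sg ^ 2 / 2) / exp w.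
Proof.
intro; unfold Rdiv. rewrite <- exp_Ropp, <- !exp_plus. f_equal. subst; field.
Qed.

Lemma es2 c sg w : w = c * sg ^ 2 ->
  exp (((2 - c) * sg) ^ 2 / 2) = exp (c * w / 2) * exp (sg ^ 2 / 2) ^ 4 / exp w ^ 2.
Proof.
intro; unfold Rdiv. rewrite exp2, exp4, <- exp_Ropp, <- !exp_plus. f_equal. subst; field.
Qed.

Lemma e2v sg : exp (2 * sg ^ 2) = exp (sg ^ 2 / 2) ^ 4.
Proof. rewrite exp4. f_equal. field. Qed.

Lemma px0 c sg w x : exp (- c * (1 + (sg * x + w))) = exp (- c * (1 + w)) * exp (- c * sg * x).
Proof. rewrite <- exp_plus. f_equal. ring. Qed.

Lemma py sg w x : exp (sg * x + w) = exp w * exp (sg * x).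
Proof. rewrite <- exp_plus. f_equal. ring. Qed.

Lemma pp1 c sg x : exp ((1 - c) * sg * x) = exp (- c * sg * x) * exp (sg * x).
Proof. rewrite <- exp_plus. f_equal. ring. Qed.

Lemma pp2 c sg x : exp ((2 - c) * sg * x) = exp (- c * sg * x) * exp (sg * x) ^ 2.
Proof. rewrite exp2, <- !exp_plus. f_equal. ring. Qed.

Lemma J1 c sg w : w = c * sg ^ 2 ->
  is_RInt_gen (fun x => exp (- c * (1 + (sg * x + w))) * RR (sg * x + w) * gd x) MI PI_
    (exp (- (c * (1 + w / 2))) * (exp (sg ^ 2 / 2) - 1)).
Proof.
intro Hw.
set (K1 := exp (- c * (1 + w))).
eapply gplus.
- eapply (Mp (- K1 * (1 + w)) (- K1 * sg) 0 (- c * sg)). reflexivity. intro x. reflexivity.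
- eapply (Mp (K1 * exp w) 0 0 ((1 - c) * sg)). reflexivity. intro x. reflexivity.
- rewrite (es0 c sg w Hw), (es1 c sg w Hw), eA. fold K1.
  pose proof (exp_pos w). subst w. field. lra.
- intro x. simpl. rewrite px0. fold K1. unfold RR. rewrite py, pp1. ring.
Qed.

Definition e2f (v : R) : R := exp (2 * v) - 2 * (1 + v) * exp (v / 2) + v + 1.

Lemma J2 c sg w : w = c * sg ^ 2 ->
  is_RInt_gen (fun x => exp (- c * (1 + (sg * x + w))) * RR (sg * x + w) ^ 2 * gd x) MI PI_
    (exp (- (c * (1 + w / 2))) * e2f (sg ^ 2)).
Proof.
intro Hw.
set (K1 := exp (- c * (1 + w))).
eapply gplus. eapply gplus.
- eapply (Mp (K1 * (1 + w) ^ 2) (2 * K1 * (1 + w) * sg) (K1 * sg ^ 2) (- c * sg)). reflexivity. intro x. reflexivity.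
- eapply (Mp (- 2 * K1 * exp w * (1 + w)) (- 2 * K1 * exp w * sg) 0 ((1 - c) * sg)). reflexivity. intro x. reflexivity.
- reflexivity.
- intro x. reflexivity.
- eapply (Mp (K1 * exp w ^ 2) 0 0 ((2 - c) * sg)). reflexivity. intro x. reflexivity.
- unfold e2f. rewrite (es0 c sg w Hw), (es1 c sg w Hw), (es2 c sg w Hw), e2v, eA. fold K1.
  pose proof (exp_pos w). subst w. field. lra.
- intro x. simpl. rewrite px0. fold K1. unfold RR. rewrite py, pp1, pp2. ring.
Qed.

Lemma gcomb3 k0 k1 k2 f0 f1 f2 l0 l1 l2 :
  is_RInt_gen f0 MI PI_ l0 -> is_RInt_gen f1 MI PI_ l1 -> is_RInt_gen f2 MI PI_ l2 ->
  is_RInt_gen (fun x => k0 * f0 x + k1 * f1 x + k2 * f2 x) MI PI_ (k0 * l0 + k1 * l1 + k2 * l2).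
Proof.
intros H0 H1 H2.
eapply gplus. eapply gplus.
- eapply gscal. apply H0. reflexivity. intro; reflexivity.
- eapply gscal. apply H1. reflexivity. intro; reflexivity.
- reflexivity.
- intro; reflexivity.
- eapply gscal. apply H2. reflexivity. intro; reflexivity.
- reflexivity.
- intro; reflexivity.
Qed.

Lemma RR_ge0 y : 0 <= RR y.
Proof. unfold RR. pose proof (exp_ineq1_le y). lra. Qed.

Lemma exp_tangent z z0 : exp z0 * (1 + z - z0) <= exp z.
Proof.
replace (exp z) with (exp z0 * exp (z - z0)) by (rewrite <- exp_plus; f_equal; ring).
apply Rmult_le_compat_l. left; apply exp_pos.
pose proof (exp_ineq1_le (z - z0)). lra.
Qed.

Lemma exp_neg_taylor z : 0 <= z -> exp (- z) <= 1 - z + z ^ 2 / 2.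
Proof.
intro Hz.
set (h := fun t => 1 - t + t ^ 2 / 2 - exp (- t)).
assert (H := @is_RInt_derive R_CompleteNormedModule h (fun t => -1 + t + exp (- t)) 0 z).
assert (H1 : is_RInt (fun t => -1 + t + exp (- t)) 0 z (minus (h z) (h 0))).
{ apply H.
  - intros. unfold h. auto_derive. auto. toR. field.
  - intros. apply contR. auto_derive. auto. }
apply (is_RInt_ge_0 _ 0 z) in H1; auto.
- unfold minus, plus, opp in H1; simpl in H1. unfold h in H1.
  rewrite Ropp_0, exp_0 in H1. lra.
- intros t _. pose proof (exp_ineq1_le (- t)). lra.
Qed.

Lemma f_split c sg x :
  exp (- (c * exp (c * sg ^ 2)) * exp (sg * x)) =
  exp (- c * (1 + (sg * x + c * sg ^ 2))) * exp (- c * RR (sg * x + c * sg ^ 2)).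
Proof.
rewrite <- exp_plus. f_equal. unfold RR. rewrite exp_plus. ring.
Qed.

Lemma main_est c sg : 0 < c -> 0 < sg ->
  exists E, is_RInt_gen (fun x => exp (- (c * exp (c * sg ^ 2)) * exp (sg * x)) * gd x) MI PI_ E /\
   exp (- (c * (exp (sg ^ 2 / 2) + c * sg ^ 2 / 2))) <= E /\
   E <= exp (- (c * (1 + c * sg ^ 2 / 2))) /\
   E <= exp (- (c * (1 + c * sg ^ 2 / 2))) * (1 - c * (exp (sg ^ 2 / 2) - 1) + c ^ 2 / 2 * e2f (sg ^ 2)) /\
   0 <= e2f (sg ^ 2).
Proof.
intros hc hsg.
set (w := c * sg ^ 2).
assert (Hw : w = c * sg ^ 2) by reflexivity.
set (f := fun x => exp (- (c * exp w) * exp (sg * x)) * gd x).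
set (f0 := fun x => exp (- c * (1 + (sg * x + w))) * gd x).
set (f1 := fun x => exp (- c * (1 + (sg * x + w))) * RR (sg * x + w) * gd x).
set (f2 := fun x => exp (- c * (1 + (sg * x + w))) * RR (sg * x + w) ^ 2 * gd x).
assert (I0 := J0 c sg w Hw). assert (I1 := J1 c sg w Hw). assert (I2 := J2 c sg w Hw).
fold f0 in I0. fold f1 in I1. fold f2 in I2.
set (A := exp (- (c * (1 + w / 2)))).
fold A in I0, I1, I2.
assert (HA : 0 < A) by apply exp_pos.
destruct (ex_gen_pos f) as [E HE].
{ intro x. apply contR. unfold f, gd. auto_derive. pose proof sqrt2pi_pos. lra. }
{ intro x. unfold f. pose proof (gd_pos x). split.
  - left. apply Rmult_lt_0_compat; auto. apply exp_pos.
  - rewrite <- (Rmult_1_l (gd x)) at 2. apply Rmult_le_compat_r; [lra|].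
    rewrite <- exp_0. destruct (Req_dec (- (c * exp w) * exp (sg * x)) 0) as [e|e].
    rewrite e; lra. left. apply exp_increasing.
    assert (0 < c * exp w * exp (sg * x)). apply Rmult_lt_0_compat. apply Rmult_lt_0_compat; auto. apply exp_pos. apply exp_pos. lra. }
assert (Hf : forall x, f x = exp (- c * (1 + (sg * x + w))) * exp (- c * RR (sg * x + w)) * gd x).
{ intro x. unfold f, w. rewrite f_split. reflexivity. }
set (mu := exp (sg ^ 2 / 2) - 1).
exists E. split; [exact HE|].
split; [|split; [|split]].
-
  assert (L := gcomb3 (exp (- c * mu) * (1 + c * mu)) (- (exp (- c * mu) * c)) 0 f0 f1 f2 _ _ _ I0 I1 I2).
  assert (P : forall x, exp (- c * mu) * (1 + c * mu) * f0 x + - (exp (- c * mu) * c) * f1 x + 0 * f2 x <= f x).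
  { intro x. rewrite Hf. unfold f0, f1, f2. set (y := sg * x + w).
    assert (T := exp_tangent (- c * RR y) (- c * mu)).
    assert (0 < exp (- c * (1 + y)) * gd x) by (apply Rmult_lt_0_compat; [apply exp_pos|apply gd_pos]).
    replace (exp (- c * mu) * (1 + c * mu) * (exp (- c * (1 + y)) * gd x) +
      - (exp (- c * mu) * c) * (exp (- c * (1 + y)) * RR y * gd x) + 0 * (exp (- c * (1 + y)) * RR y ^ 2 * gd x))
      with ((exp (- c * (1 + y)) * gd x) * (exp (- c * mu) * (1 + - c * RR y - - c * mu))) by ring.
    replace (exp (- c * (1 + y)) * exp (- c * RR y) * gd x) with ((exp (- c * (1 + y)) * gd x) * exp (- c * RR y)) by ring.
    apply Rmult_le_compat_l; lra. }
  assert (Hle := gen_le _ f _ _ P L HE).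
  eapply Rle_trans; [|exact Hle]. right.
  unfold A, mu. replace (- (c * (exp (sg ^ 2 / 2) + w / 2))) with (- c * (exp (sg ^ 2 / 2) - 1) + - (c * (1 + w / 2))) by field.
  rewrite exp_plus. ring.
-
  assert (P : forall x, f x <= f0 x).
  { intro x. rewrite Hf. unfold f0. set (y := sg * x + w).
    assert (0 < exp (- c * (1 + y)) * gd x) by (apply Rmult_lt_0_compat; [apply exp_pos|apply gd_pos]).
    assert (exp (- c * RR y) <= 1).
    { rewrite <- exp_0. pose proof (RR_ge0 y). destruct (Req_dec (- c * RR y) 0) as [e|e].
      rewrite e; lra. left; apply exp_increasing. nra. }
    replace (exp (- c * (1 + y)) * exp (- c * RR y) * gd x) with ((exp (- c * (1 + y)) * gd x) * exp (- c * RR y)) by ring.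
    rewrite <- (Rmult_1_r (exp (- c * (1 + y)) * gd x)) at 2.
    apply Rmult_le_compat_l; lra. }
  assert (Hle := gen_le _ _ _ _ P HE I0). exact Hle.
-
  assert (L := gcomb3 1 (- c) (c ^ 2 / 2) f0 f1 f2 _ _ _ I0 I1 I2).
  assert (P : forall x, f x <= 1 * f0 x + - c * f1 x + c ^ 2 / 2 * f2 x).
  { intro x. rewrite Hf. unfold f0, f1, f2. set (y := sg * x + w).
    assert (0 < exp (- c * (1 + y)) * gd x) by (apply Rmult_lt_0_compat; [apply exp_pos|apply gd_pos]).
    pose proof (RR_ge0 y).
    assert (T := exp_neg_taylor (c * RR y) ltac:(nra)).
    replace (- c * RR y) with (- (c * RR y)) by ring.
    replace (1 * (exp (- c * (1 + y)) * gd x) + - c * (exp (- c * (1 + y)) * RR y * gd x) +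
      c ^ 2 / 2 * (exp (- c * (1 + y)) * RR y ^ 2 * gd x))
      with ((exp (- c * (1 + y)) * gd x) * (1 - c * RR y + (c * RR y) ^ 2 / 2)) by field.
    replace (exp (- c * (1 + y)) * exp (- (c * RR y)) * gd x) with ((exp (- c * (1 + y)) * gd x) * exp (- (c * RR y))) by ring.
    apply Rmult_le_compat_l; lra. }
  assert (Hle := gen_le _ _ _ _ P HE L).
  eapply Rle_trans. exact Hle. right. unfold mu. fold A. field.
-
  assert (H := gen_nonneg _ _ ltac:(intro x; unfold f2; apply Rmult_le_pos; [apply Rmult_le_pos; [left; apply exp_pos| apply pow2_ge_0] | left; apply gd_pos]) I2).
  apply (Rmult_le_reg_l A); auto. lra.
Qed.

Lemma lambert_spec y : 0 < y -> 0 < LambertW y /\ LambertW y * exp (LambertW y) = y.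
Proof.
intro Hy.
assert (Ex : exists x, -1 < x /\ x * exp x = y).
{ assert (Hc : continuity (fun x => x * exp x - y)).
  { apply continuity_minus; [apply continuity_mult; [apply derivable_continuous, derivable_id | apply derivable_continuous, derivable_exp] | apply continuity_const; intros ? ?; auto]. }
  destruct (IVT (fun x => x * exp x - y) 0 y Hc Hy) as [z [Hz1 Hz2]].
  - rewrite exp_0. lra.
  - assert (1 < exp y). { rewrite <- exp_0. apply exp_increasing. auto. } nra.
  - exists z. split. lra. lra. }
unfold LambertW.
destruct (epsilon_spec (inhabits 0) (fun x => -1 < x /\ x * exp x = y) Ex) as [H1 H2].
split; auto.
destruct (Rle_or_lt (epsilon (inhabits 0) (fun x => -1 < x /\ x * exp x = y)) 0) as [H|H]; auto.
pose proof (exp_pos (epsilon (inhabits 0) (fun x => -1 < x /\ x * exp x = y))). nra.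
Qed.

Lemma ln_le_m1 u : 0 < u -> ln u <= u - 1.
Proof. intro. pose proof (exp_ineq1_le (ln u)). rewrite exp_ln in H0; auto. lra. Qed.

Lemma final_alg v w Eh L e :
  0 < v -> 0 < w -> 1 <= Eh ->
  w / v * (1 + w / 2) <= L -> L <= w / v * (Eh + w / 2) ->
  w / v * (Eh + w / 2) - (w / v) ^ 2 * e / 2 <= L -> 0 <= e ->
  / Eh <= (1 + w / 2) / (Eh + w / 2)
  /\ (1 + w / 2) / (Eh + w / 2) <= w / v * (1 + w / 2) / L
  /\ w / v * (1 + w / 2) / L <= 1
  /\ 1 <= w / v * (Eh + w / 2) / L
  /\ w / v * (Eh + w / 2) / L <= 1 + w * e / (2 * v + v * w)
  /\ 1 + w * e / (2 * v + v * w) <= 1 + e / v.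
Proof.
intros hv hw hE h1 h2 h3 he.
set (c := w / v) in *.
assert (hc : 0 < c) by (unfold c; apply Rdiv_lt_0_compat; auto).
assert (hA : 0 < c * (1 + w / 2)) by (apply Rmult_lt_0_compat; lra).
assert (hL : 0 < L) by (eapply Rlt_le_trans; [exact hA | exact h1]).
split; [|split; [|split; [|split; [|split]]]].
- apply (Rmult_le_reg_r Eh). lra. rewrite Rinv_l by lra.
  apply (Rmult_le_reg_r (Eh + w / 2)). lra. unfold Rdiv.
  replace ((1 + w * / 2) * / (Eh + w * / 2) * Eh * (Eh + w * / 2)) with ((1 + w / 2) * Eh) by (field; lra).
  nra.
- apply (Rmult_le_reg_r (Eh + w / 2)). lra. apply (Rmult_le_reg_r L). lra.
  unfold Rdiv.
  replace ((1 + w * / 2) * / (Eh + w * / 2) * (Eh + w * / 2) * L) with ((1 + w/2) * L) by (field; lra).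
  replace (c * (1 + w * / 2) * / L * (Eh + w * / 2) * L) with ((1 + w/2) * (c * (Eh + w/2))) by (field; lra).
  apply Rmult_le_compat_l; lra.
- apply (Rmult_le_reg_r L). lra. unfold Rdiv. rewrite Rmult_assoc, Rinv_l by lra. lra.
- apply (Rmult_le_reg_r L). lra. unfold Rdiv. rewrite Rmult_assoc, Rinv_l by lra. lra.
- assert (E1 : w * e / (2 * v + v * w) = c ^ 2 * e / 2 / (c * (1 + w / 2))).
  { unfold c. field. repeat split; nra. }
  rewrite E1.
  assert (hd : 0 <= c ^ 2 * e / 2) by (apply Rmult_le_pos; [apply Rmult_le_pos; nra|lra]).
  assert (c ^ 2 * e / 2 / L <= c ^ 2 * e / 2 / (c * (1 + w / 2))).
  { unfold Rdiv. apply Rmult_le_compat_l; auto. apply Rinv_le_contravar; auto. }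
  assert (c * (Eh + w / 2) / L <= 1 + c ^ 2 * e / 2 / L).
  { apply (Rmult_le_reg_r L). lra. unfold Rdiv.
    replace (c * (Eh + w * / 2) * / L * L) with (c * (Eh + w/2)) by (field; lra).
    replace ((1 + c ^ 2 * e * / 2 * / L) * L) with (L + c^2 * e / 2) by (field; lra). lra. }
  lra.
- apply Rplus_le_compat_l.
  assert (Ed : e / v - w * e / (2 * v + v * w) = 2 * e / (2 * v + v * w)) by (field; split; nra).
  assert (0 <= 2 * e / (2 * v + v * w)).
  { unfold Rdiv. apply Rmult_le_pos. lra. left; apply Rinv_0_lt_compat; nra. }
  lra.
Qed.

Theorem proposition1 (T r nu mu eta sigma s0 lam gam : R)
  (hT : 0 < T) (heta : 0 < eta) (hsigma : 0 < sigma) (hs0 : 0 < s0)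
  (hlam : 0 < lam) (hgam : 0 < gam) :
  forall rho : R, -1 < rho < 1 ->
  let w := wfun T r nu mu eta sigma rho s0 lam gam in
  let D := Dval T r nu mu eta sigma rho s0 lam gam in
  let G := Gval T r nu mu eta sigma rho s0 lam gam in
  let p := pval T r nu mu eta sigma rho s0 lam gam in
  exp (- (eta ^ 2 * T / 2)) <= (1 + w / 2) / (exp (eta ^ 2 * T / 2) + w / 2)
  /\ (1 + w / 2) / (exp (eta ^ 2 * T / 2) + w / 2) <= D / p
  /\ D / p <= 1
  /\ 1 <= G / p
  /\ G / p <= 1 + w * e2 eta T / (2 * eta ^ 2 * T + eta ^ 2 * T * w)
  /\ 1 + w * e2 eta T / (2 * eta ^ 2 * T + eta ^ 2 * T * w)
       <= 1 + e2 eta T / (eta ^ 2 * T).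
Proof.
intros rho Hrho w D G p.
assert (h1r : 0 < 1 - rho ^ 2) by nra.
assert (hth : 0 < theta lam gam rho) by (unfold theta; apply Rmult_lt_0_compat; [apply Rmult_lt_0_compat|]; auto).
assert (ha : 0 < theta lam gam rho * s0 * exp (drift nu eta rho mu r sigma * T)).
{ apply Rmult_lt_0_compat; [apply Rmult_lt_0_compat|]; auto. apply exp_pos. }
assert (hv : 0 < eta ^ 2 * T) by (apply Rmult_lt_0_compat; auto; nra).
assert (hsg : 0 < eta * sqrt T) by (apply Rmult_lt_0_compat; auto; apply sqrt_lt_R0; auto).
assert (hsg2 : (eta * sqrt T) ^ 2 = eta ^ 2 * T).
{ rewrite Rpow_mult_distr. f_equal. simpl. rewrite Rmult_1_r. apply sqrt_sqrt. lra. }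
destruct (lambert_spec (theta lam gam rho * s0 * exp (drift nu eta rho mu r sigma * T) * (eta ^ 2 * T)))
  as [hw hwe].
{ apply Rmult_lt_0_compat; auto. }
assert (Hw : w = LambertW (theta lam gam rho * s0 * exp (drift nu eta rho mu r sigma * T) * (eta ^ 2 * T))).
{ unfold w, wfun. f_equal. ring. }
rewrite <- Hw in hw, hwe.
set (c := w / (eta ^ 2 * T)).
assert (hc : 0 < c) by (unfold c; apply Rdiv_lt_0_compat; auto).
assert (hcw : c * (eta * sqrt T) ^ 2 = w) by (rewrite hsg2; unfold c; field; lra).
assert (hca : c * exp (c * (eta * sqrt T) ^ 2) = theta lam gam rho * s0 * exp (drift nu eta rho mu r sigma * T)).
{ rewrite hcw. unfold c. apply (Rmult_eq_reg_r (eta ^ 2 * T)). 2: lra.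
  replace (w / (eta ^ 2 * T) * exp w * (eta ^ 2 * T)) with (w * exp w) by (field; lra). exact hwe. }
destruct (main_est c (eta * sqrt T) hc hsg) as [E [HE [b1 [b2 [b3 b4]]]]].
rewrite hca in HE. rewrite hcw in b1, b2, b3. rewrite hsg2 in b1, b3, b4.
assert (HI : gauss_expect (fun n => exp (- theta lam gam rho * s0 * exp (drift nu eta rho mu r sigma * T) * exp (eta * sqrt T * n))) = E).
{ unfold gauss_expect. apply (@is_RInt_gen_unique R_CompleteNormedModule MI PI_ (Proper_StrongProper _ (Rbar_locally_filter _)) (Proper_StrongProper _ (Rbar_locally_filter _))).
  refine (is_RInt_gen_ext _ _ _ _ HE). apply filter_forall. intros ab x _.
  unfold gd, gauss_density. f_equal. f_equal. ring. }
assert (hE : 0 < E) by (eapply Rlt_le_trans; [apply exp_pos|exact b1]).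
set (L := - ln E).
set (Eh := exp (eta ^ 2 * T / 2)).
assert (hEh : 1 <= Eh) by (unfold Eh; rewrite <- exp_0; destruct (Req_dec (eta ^ 2 * T / 2) 0) as [e|e]; [rewrite e; lra| left; apply exp_increasing; lra]).
assert (he2 : e2f (eta ^ 2 * T) = e2 eta T) by (unfold e2f, e2; replace (2 * (eta ^ 2 * T)) with (2 * eta ^ 2 * T) by ring; reflexivity).
rewrite he2 in b3, b4.
assert (L1 : w / (eta ^ 2 * T) * (1 + w / 2) <= L).
{ unfold L. apply Ropp_le_cancel. rewrite Ropp_involutive.
  replace (- (w / (eta ^ 2 * T) * (1 + w / 2))) with (ln (exp (- (c * (1 + w / 2))))).
  apply ln_le; auto. rewrite ln_exp. unfold c. ring. }
assert (L2 : L <= w / (eta ^ 2 * T) * (Eh + w / 2)).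
{ unfold L. apply Ropp_le_cancel. rewrite Ropp_involutive.
  replace (- (w / (eta ^ 2 * T) * (Eh + w / 2))) with (ln (exp (- (c * (exp (eta ^ 2 * T / 2) + w / 2))))).
  apply ln_le; auto. apply exp_pos. rewrite ln_exp. unfold c, Eh. ring. }
set (Q := 1 - c * (Eh - 1) + c ^ 2 / 2 * e2 eta T).
assert (hQ : 0 < Q).
{ fold Eh in b3. fold Q in b3. pose proof (exp_pos (- (c * (1 + w / 2)))).
  destruct (Rle_or_lt Q 0); auto. nra. }
assert (L3 : w / (eta ^ 2 * T) * (Eh + w / 2) - (w / (eta ^ 2 * T)) ^ 2 * e2 eta T / 2 <= L).
{ fold Eh in b3. fold Q in b3. unfold L. apply Ropp_le_cancel. rewrite Ropp_involutive.
  apply Rle_trans with (ln (exp (- (c * (1 + w / 2))) * Q)).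
  apply ln_le; auto. rewrite ln_mult, ln_exp; auto. 2: apply exp_pos.
  pose proof (ln_le_m1 Q hQ). unfold Q in *. fold c. lra. }
destruct (final_alg (eta ^ 2 * T) w Eh L (e2 eta T) hv hw hEh L1 L2 L3 b4) as [f1 [f2 [f3 [f4 [f5 f6]]]]].
assert (Hp : p = lam * exp (- r * T) / theta lam gam rho * L).
{ unfold p, pval. rewrite HI. unfold L, theta. field. lra. }
assert (HL : 0 < L) by (eapply Rlt_le_trans; [|exact L1]; apply Rmult_lt_0_compat; [apply Rdiv_lt_0_compat|]; lra).
assert (HK : 0 < lam * exp (- r * T) / theta lam gam rho) by (apply Rdiv_lt_0_compat; auto; apply Rmult_lt_0_compat; auto; apply exp_pos).
assert (HD : D / p = w / (eta ^ 2 * T) * (1 + w / 2) / L).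
{ rewrite Hp. unfold D, Dval. fold w. field. repeat split; try lra; pose proof (exp_pos (- r * T)); lra. }
assert (HG : G / p = w / (eta ^ 2 * T) * (Eh + w / 2) / L).
{ rewrite Hp. unfold G, Gval. fold w. unfold Eh. replace (eta ^ 2 / 2 * T) with (eta ^ 2 * T / 2) by field. field. repeat split; try lra; pose proof (exp_pos (- r * T)); lra. }
rewrite HD, HG. fold Eh. rewrite exp_Ropp. fold Eh.
replace (2 * eta ^ 2 * T + eta ^ 2 * T * w) with (2 * (eta ^ 2 * T) + (eta ^ 2 * T) * w) by ring.
repeat split; auto.
Qed.
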